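(* Let $G$ be a connected graph with $\delta(G)=1$, girth at least $15$, and $G\in\mathcal U$. If $s_1$ and $s_2$ are single star support vertices of $G$, then $d_G(s_1,s_2)\neq 3$.
   Context: All graphs are finite and simple. A set $P\subseteq V(G)$ is an open packing if no two distinct vertices of $P$ have a common neighbor; it is maximal if maximal under inclusion among open packings. $\rho^o(G)$ is the maximum size of an open packing and $\rho^o_L(G)$ the minimum size of a maximal open packing; $\mathcal U$ is the class of graphs with $\rho^o_L(G)=\rho^o(G)$. A leaf is a vertex of degree $1$; a support vertex is a vertex adjacent to at least one leaf; $S_G$ is the set of support vertices. A single star support vertex is a support vertex not adjacent to any other support vertex; a double star support vertex is a support vertex adjacent to another support vertex. *)

(* Defs.v *)
From mathcomp Require Import all_boot.
Set Implicit Arguments. Unset Strict Implicit. Unset Printing Implicit Defensive.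

Definition simple_graph (T : finType) (e : rel T) : Prop :=
  symmetric e /\ irreflexive e.

Section Graph.
Variables (T : finType) (e : rel T).

Definition nbhd (v : T) : {set T} := [set w | e v w].
Definition deg (v : T) : nat := #|nbhd v|.

Definition min_degree_is (m : nat) : Prop :=
  (exists v : T, deg v = m) /\ (forall v : T, m <= deg v).

Definition connected_graph : Prop := forall u v : T, connect e u v.

Definition walk_len (u v : T) (k : nat) : Prop :=
  exists p : seq T, [/\ path e u p, last u p = v & size p = k].

Definition dist_is (u v : T) (k : nat) : Prop :=
  walk_len u v k /\ (forall j, j < k -> ~ walk_len u v j).

Definition is_cycle (c : seq T) : Prop :=
  [/\ 3 <= size c, uniq c & cycle e c].

(* girth at least g: no cycle of length < g (acyclic graphs have infinite girth) *)
Definition girth_at_least (g : nat) : Prop :=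
  forall c : seq T, is_cycle c -> g <= size c.

Definition open_packing (P : {set T}) : Prop :=
  forall u v, u \in P -> v \in P -> u != v -> forall w, ~~ (e u w && e v w).

Definition maximal_open_packing (P : {set T}) : Prop :=
  open_packing P /\ forall Q : {set T}, open_packing Q -> P \subset Q -> P = Q.

Definition open_packing_number (n : nat) : Prop :=
  (exists P, open_packing P /\ #|P| = n) /\
  (forall P, open_packing P -> #|P| <= n).

Definition lower_open_packing_number (n : nat) : Prop :=
  (exists P, maximal_open_packing P /\ #|P| = n) /\
  (forall P, maximal_open_packing P -> n <= #|P|).

Definition in_U : Prop :=
  exists n, open_packing_number n /\ lower_open_packing_number n.

Definition leaf (v : T) : bool := deg v == 1.
Definition support (v : T) : bool := [exists w, e v w && leaf w].
Definition single_star_support (v : T) : bool :=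
  support v && [forall w, e v w ==> ~~ support w].

End Graph.

(* Main.v *)
Require Import Defs.
From mathcomp Require Import all_boot zify.
Set Implicit Arguments. Unset Strict Implicit. Unset Printing Implicit Defensive.

Section Aux.
Variables (T : finType) (e : rel T).
Hypothesis esy : symmetric e.
Hypothesis eirr : irreflexive e.
Hypothesis gir : girth_at_least e 15.

Lemma CL (f : nat -> T) (k : nat) :
  (forall i, i < k -> e (f i) (f i.+1)) ->
  (forall i, i.+2 <= k -> f i != f i.+2) ->
  f 0 = f k -> 0 < k -> 15 <= k.
Proof.
move=> W NB fk k0.
have ex : exists d, (0 < d) && [exists i : 'I_k.+1, (i + d <= k) && (f i == f (i + d))].
  exists k; rewrite k0 /=; apply/existsP; exists ord0; by rewrite /= add0n leqnn fk eqxx.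
case: (ex_minnP ex) => d /andP[d0 /existsP[i /andP[idk /eqP fi]]] dmin.
pose g := fun m => f (i + m).
pose c := map g (iota 0 d).
have d3 : 3 <= d.
  case: d d0 idk fi dmin {g c} => [|[|[|d]]] //= _ idk fi _.
  - have := W i; rewrite addn1 in idk fi *. move=> /(_ idk). by rewrite -fi eirr.
  - have := NB i; rewrite addn2 in idk fi *. by rewrite fi eqxx => /(_ idk).
have cyc : is_cycle e c.
  split.
  - by rewrite size_map size_iota.
  - rewrite map_inj_in_uniq ?iota_uniq //.
    have key : forall m1 m2, m1 < m2 -> m2 < d -> g m1 = g m2 -> False.
      move=> m1 m2 h m2d eq12.
      have : d <= m2 - m1.
        apply: dmin. rewrite subn_gt0 h /=. apply/existsP.
        have ik : i + m1 < k.+1 by lia.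
        exists (Ordinal ik) => /=. apply/andP; split; first by lia.
        have -> : i + m1 + (m2 - m1) = i + m2 by lia.
        by apply/eqP.
      lia.
    move=> m1 m2; rewrite !mem_iota /= !add0n => m1d m2d eq12.
    case: (ltngtP m1 m2) => // h; first by case: (key _ _ h m2d eq12).
    by case: (key _ _ h m1d (esym eq12)).
  - rewrite (cycle_path (f 0)).
    apply/(pathP (f 0)) => j; rewrite size_map size_iota => jd.
    rewrite (nth_map 0) ?size_iota // nth_iota // add0n.
    case: j jd => [|j] jd /=.
      rewrite -(nth_last (f 0)) size_map size_iota (nth_map 0) ?size_iota; last by lia.
      rewrite nth_iota; last by lia.
      rewrite /g add0n addn0 fi.
      have -> : i + d = (i + d.-1).+1 by lia.
      apply: W; lia.
    rewrite (nth_map 0) ?size_iota; last by lia.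
    rewrite nth_iota; last by lia.
    rewrite /g add0n addnS. apply: W. lia.
have := gir cyc. rewrite size_map size_iota. lia.
Qed.

Lemma KLf (N : nat) : forall (f g : nat -> T) (k l : nat), k + l <= N -> k + l <= 14 ->
  (forall i, i < k -> e (f i) (f i.+1)) -> (forall i, i.+2 <= k -> f i != f i.+2) ->
  (forall i, i < l -> e (g i) (g i.+1)) -> (forall i, i.+2 <= l -> g i != g i.+2) ->
  f 0 = g 0 -> f k = g l -> k = l /\ (forall i, i <= k -> f i = g i).
Proof.
elim: N => [|N IH] f g k l kN k14 Wf Nf Wg Ng h0 hk.
  have k0 : k = 0 by lia. have l0 : l = 0 by lia. subst.
  by split=> // i; rewrite leqn0 => /eqP ->.
case: k kN k14 Wf Nf hk => [|k] kN k14 Wf Nf hk.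
  case: l kN k14 Wg Ng hk => [|l] kN k14 Wg Ng hk.
    by split=> // i; rewrite leqn0 => /eqP ->.
  exfalso. have := CL Wg Ng. rewrite -h0 hk => /(_ erefl isT). lia.
case: l kN k14 Wg Ng hk => [|l] kN k14 Wg Ng hk.
  exfalso. have := CL Wf Nf. rewrite h0 hk => /(_ erefl isT). lia.
case: (eqVneq (f k) (g l)) => [pe|pne].
  have [kl H] : k = l /\ (forall i, i <= k -> f i = g i).
    apply: (IH f g k l) => //; try lia.
    - by move=> i ik; apply: Wf; lia.
    - by move=> i ik; apply: Nf; lia.
    - by move=> i ik; apply: Wg; lia.
    - by move=> i ik; apply: Ng; lia.
  split; first by rewrite kl.
  move=> i; rewrite leq_eqVlt => /orP[/eqP ->|ik]; first by rewrite hk kl.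
  by apply: H.
exfalso.
pose K := k.+1 + l.+1.
pose h := fun j => if j <= k.+1 then f j else g (K - j).
have hval : forall j, k.+1 <= j -> h j = g (K - j).
  move=> j kj; rewrite /h; case: ifP => // jk.
  have -> : j = k.+1 by lia.
  by rewrite hk; congr g; rewrite /K; lia.
have hlow : forall j, j <= k.+1 -> h j = f j by move=> j jk; rewrite /h jk.
have := @CL h K.
have W : forall i, i < K -> e (h i) (h i.+1).
  move=> j jK; case: (ltnP j k.+1) => jk.
    rewrite !hlow //; last by lia. apply: Wf; lia.
  rewrite !hval //; last by lia.
  have -> : K - j = (K - j.+1).+1 by rewrite /K; lia.
  rewrite esy; apply: Wg; rewrite /K; lia.
have NB : forall i, i.+2 <= K -> h i != h i.+2.
  move=> j jK; case: (ltnP j.+1 k.+1) => jk.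
    rewrite !hlow //; last by lia. apply: Nf; lia.
  case: (ltnP j k.+1) => jk2.
    have jE : j = k by lia. subst j.
    rewrite hlow // hval // .
    have -> : K - k.+2 = l by rewrite /K; lia.
    done.
  rewrite !hval //; last by lia.
  have -> : K - j = (K - j.+2).+2 by rewrite /K; lia.
  rewrite eq_sym; apply: Ng; rewrite /K; lia.
move=> /(_ W NB).
rewrite hlow // hval; last by rewrite /K; lia.
rewrite subnn h0 => /(_ erefl isT). rewrite /K. lia.
Qed.


Fixpoint nbs (s : seq T) : bool :=
  if s is a :: s' then (if s' is _ :: c :: _ then a != c else true) && nbs s' else true.

Lemma nbsP x0 s : nbs s -> forall i, i.+2 < size s -> nth x0 s i != nth x0 s i.+2.
Proof.
elim: s => [|a s IH] //= /andP[h1 h2] [|i] /=.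
  by case: s IH h1 h2 => [|b [|c s]].
move=> hi; exact: IH.
Qed.

Lemma KL u p q : path e u p -> path e u q -> nbs (u :: p) -> nbs (u :: q) ->
  last u p = last u q -> size p + size q <= 14 -> p = q.
Proof.
move=> pp pq np nq lpq s14.
have [sz H] : size p = size q /\ (forall i, i <= size p -> nth u (u :: p) i = nth u (u :: q) i).
  apply: (@KLf (size p + size q)) => //.
  - by move/(pathP u): pp.
  - by move=> i hi; apply: nbsP.
  - by move/(pathP u): pq.
  - by move=> i hi; apply: nbsP.
  - by rewrite -[size p]/((size (u :: p)).-1) -[size q]/((size (u :: q)).-1) !nth_last.
apply: (@eq_from_nth _ u) => // i ip.
by have := H i.+1 ip.
Qed.

Definition opb (P : {set T}) :=
  [forall u, [forall v, [forall w, [&& u \in P, v \in P & u != v] ==> ~~ (e u w && e v w)]]].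

Lemma opP P : reflect (open_packing e P) (opb P).
Proof.
apply: (iffP idP).
- move=> H u v uP vP uv w.
  move: H => /forallP /(_ u) /forallP /(_ v) /forallP /(_ w) /implyP; apply.
  by rewrite uP vP uv.
- move=> H; apply/forallP => u; apply/forallP => v; apply/forallP => w.
  apply/implyP => /and3P[uP vP uv]; exact: H.
Qed.

Hypothesis md : forall v, 1 <= deg e v.
Hypothesis inU : in_U e.

Lemma LL (S P' : {set T}) : open_packing e S -> open_packing e P' ->
  (forall t u v, t \in P' -> e t u -> e u v -> exists s, s \in S /\ exists u', e s u' /\ e u' v) ->
  #|S| < #|P'| -> False.
Proof.
move: inU => [n [[_ nmax] [_ nmin]]] opS opT N2 cST.
have sS : opb S && (S \subset S) by rewrite subxx andbT; apply/opP.
case: (@arg_maxnP _ S (fun P : {set T} => opb P && (S \subset P)) (fun P => #|P|) sS) => P /andP[/opP opPP SP] Pmax.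
have mP : maximal_open_packing e P.
  split=> // Q opQ0 PQ. apply/eqP; rewrite eqEcard PQ /=.
  apply: Pmax; rewrite (subset_trans SP PQ) andbT; exact/opP.
have nP := nmin P mP.
pose Q := (P :\: S) :|: P'.
have bad : forall u v w, u \in P :\: S -> v \in P' -> e u w -> e v w -> False.
  move=> u v w; rewrite inE => /andP[uS uP] vT uw vw.
  have [s [sS' [u' [su' u'u]]]] := N2 v w u vT vw ltac:(by rewrite esy).
  have sP : s \in P by apply: (subsetP SP).
  case: (eqVneq s u) => [su|su]; first by move: sS'; rewrite su (negbTE uS).
  have := opPP s u sP uP su u'. by rewrite su' esy u'u.
have opQ : open_packing e Q.
  move=> u v; rewrite !in_setU => /orP[uP|uT] /orP[vP|vT] uv w; apply/negP => /andP[uw vw].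
  - move: uP vP; rewrite !inE => /andP[_ uP] /andP[_ vP]. by have := opPP u v uP vP uv w; rewrite uw vw.
  - exact: (bad u v w).
  - exact: (bad v u w).
  - by have := opT u v uT vT uv w; rewrite uw vw.
have dis : (P :\: S) :&: P' = set0.
  apply/eqP; rewrite -subset0; apply/subsetP => v; rewrite !inE => /andP[/andP[vS vP] vT].
  have := md v; rewrite /deg => /card_gt0P [w]; rewrite inE => vw.
  by case: (bad v v w) => //; rewrite inE vS.
have := nmax Q opQ.
rewrite /Q cardsU dis cards0 subn0 cardsD (setIidPr SP).
have := subset_leq_card SP. lia.
Qed.

Lemma leafN l v w : leaf e l -> e l v -> e l w -> w = v.
Proof.
rewrite /leaf /deg => /cards1P [x hx] lv lw.
have : v \in nbhd e l by rewrite inE.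
have : w \in nbhd e l by rewrite inE.
by rewrite hx !inE => /eqP -> /eqP ->.
Qed.

Lemma other v u : ~~ leaf e v -> exists w, e v w && (w != u).
Proof.
move=> nl; have := md v; move: nl; rewrite /leaf /deg => nl d1.
have : 0 < #|nbhd e v :\ u|.
  have := cardsD1 u (nbhd e v). case: (u \in nbhd e v) => /=; lia.
move/card_gt0P => [w]; rewrite !inE => /andP[wu vw]. exists w; by rewrite vw wu.
Qed.

Lemma supp2 s t x : Defs.support e s -> Defs.support e t -> e x s -> e x t -> s != t -> ~~ e s t ->
  (forall c, e x c -> e s c -> False) -> False.
Proof.
move=> /existsP [ls /andP[sls lls]] /existsP [lt /andP[tlt llt]] xs xt st nst nc.
have lsN : forall w, e ls w -> w = s by move=> w; apply: leafN; rewrite // esy.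
have ltN : forall w, e lt w -> w = t by move=> w; apply: leafN; rewrite // esy.
have lss : ls != s by apply/eqP => h; move: sls; rewrite h eirr.
have lslt : ls != lt.
  apply/eqP => h; move/negP: st; apply; apply/eqP.
  by rewrite -(lsN t) // h esy.
have slt : s != lt.
  apply/eqP => h; move/negP: nst; apply. by rewrite h esy.
have xs' : x != s by apply/eqP => h; move: xs; rewrite h eirr.
apply: (@LL [set x; s] [set ls; s; lt]).
- move=> u v; rewrite !inE => /orP[]/eqP-> /orP[]/eqP-> //; rewrite ?eqxx // => _ w;
  apply/negP => /andP[h1 h2]; [apply: (nc w) | apply: (nc w)] => //.
- move=> u v; rewrite !inE => /orP[/orP[/eqP->|/eqP->]|/eqP->] /orP[/orP[/eqP->|/eqP->]|/eqP->];
  move=> uv w; apply/negP => /andP[h1 h2]; move: uv h1 h2; rewrite ?eqxx //;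
  move=> _ h1 h2; first [ by move: h2; rewrite (lsN w h1) eirr | by move: h1; rewrite (lsN w h2) eirr
    | by move/negP: st; apply; apply/eqP; rewrite -(lsN w h1) (ltN w h2)
    | by move/negP: st; apply; apply/eqP; rewrite -(lsN w h2) (ltN w h1)
    | by move/negP: nst; apply; rewrite -(ltN w h2) | by move/negP: nst; apply; rewrite -(ltN w h1) ].
- move=> t' u v; rewrite !inE => /orP[/orP[/eqP->|/eqP->]|/eqP->] tu uv.
  + exists x; split; first by rewrite !inE eqxx.
    exists s; split=> //; by rewrite -(lsN u tu).
  + exists s; split; first by rewrite !inE eqxx orbT.
    by exists u; split.
  + exists x; split; first by rewrite !inE eqxx.
    exists t; split=> //; by rewrite -(ltN u tu).
- rewrite -setUA [X in _ < X]cardsU1 !cards2 !inE (negbTE lss) (negbTE lslt) slt /=.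
  by case: (x != s).
Qed.

End Aux.

Ltac bsolve H := rewrite /= ?andbT ?andTb; repeat (apply/andP; split); try done;
  try (by rewrite eq_sym); try (by rewrite H).

Theorem claim1 (T : finType) (e : rel T) (s1 s2 : T) :
  simple_graph e ->
  connected_graph e ->
  min_degree_is e 1 ->
  girth_at_least e 15 ->
  in_U e ->
  single_star_support e s1 ->
  single_star_support e s2 ->
  ~ dist_is e s1 s2 3.
Proof.
move=> [esy eirr] _ [_ md] gir inU ss1 ss2 [[p [pp lp sp]] dmin].
case: p pp lp sp => [|a [|b [|c [|]]]] //= pp lp _; subst c.
move: pp => /and4P[s1a ab bs2 _].
have KLe := @KL T e esy eirr gir s1.
have LLe := LL esy md inU.
have supp := supp2 esy eirr md inU.
have ns12 : ~~ e s1 s2.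
  apply/negP => h; apply: (dmin 1 erefl); exists [:: s2]; by split; rewrite /= ?h.
have s1b : s1 != b by apply/eqP => h; move: ns12; rewrite h bs2.
have as2 : a != s2 by apply/eqP => h; move: ns12; rewrite -h s1a.
move: ss1 => /andP[sup1 /forallP nsup1].
move: ss2 => /andP[/existsP[l2 /andP[s2l2 ll2]] _].
have l2N : forall w, e l2 w -> w = s2 by move=> w; apply: leafN; rewrite // esy.
have tri : forall x y, e s1 x -> e x y -> y != s1 -> ~~ e s1 y.
  move=> x y s1x xy ys1; apply/negP => h.
  have H : [:: y] = [:: x; y] by apply: KLe; bsolve esy.
  by move/(congr1 size): H.
pose qual x y := [&& e s1 x, x != a, e x y & y != s1].
pose zf x y := odflt x [pick z | e y z && (z != x)].
pose wf x y := odflt y [pick w | e (zf x y) w && (w != y)].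
have Hq : forall x y, qual x y ->
    [/\ e y (zf x y), zf x y != x, e (zf x y) (wf x y) & wf x y != y].
  move=> x y /and4P[s1x xa xy ys1].
  have nxs : ~~ Defs.support e x by apply: (implyP (nsup1 x)).
  have ylf : ~~ leaf e y.
    apply/negP => ly; move/negP: nxs; apply; apply/existsP; exists y; by rewrite xy ly.
  have ysup : ~~ Defs.support e y.
    apply/negP => sy. apply: (supp s1 y x sup1 sy) => //.
    - by rewrite esy.
    - by rewrite eq_sym.
    - exact: (tri x).
    - move=> c xc s1c. have : c != s1 by apply/eqP => h; move: s1c; rewrite h eirr.
      by move/(tri x c s1x xc)/negP.
  have [z0 /andP[yz0 z0x]] := other md x ylf.
  have [Hz1 Hz2] : e y (zf x y) /\ zf x y != x.
    rewrite /zf; case: pickP => [z /andP[h1 h2] | none] //=.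
    by move: (none z0); rewrite yz0 z0x.
  have zlf : ~~ leaf e (zf x y).
    apply/negP => lz; move/negP: ysup; apply; apply/existsP; exists (zf x y); by rewrite Hz1 lz.
  have [w0 /andP[zw0 w0y]] := other md y zlf.
  have [Hw1 Hw2] : e (zf x y) (wf x y) /\ wf x y != y.
    rewrite /wf; case: pickP => [w /andP[h1 h2] | none] //=.
    by move: (none w0); rewrite zw0 w0y.
  by split.
have B5a : forall x y, qual x y -> wf x y != s1.
  move=> x y q; have [Hz1 Hz2 Hw1 Hw2] := Hq x y q; move: q => /and4P[s1x xa xy ys1].
  apply/eqP => h.
  have H : [:: x; y; zf x y; wf x y] = [::].
    by apply: KLe; bsolve esy; rewrite /= h.
  by [].
have B3 : forall x y c, qual x y -> e (wf x y) c -> e s1 c -> False.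
  move=> x y c q wc s1c; have [Hz1 Hz2 Hw1 Hw2] := Hq x y q; move: q => /and4P[s1x xa xy ys1].
  case: (eqVneq c (zf x y)) => [cz|cz].
    have H : [:: x; y; zf x y] = [:: c] by apply: KLe; bsolve esy; rewrite cz.
    by move/(congr1 size): H.
  have H : [:: x; y; zf x y; wf x y; c] = [:: c] by apply: KLe; bsolve esy.
  by move/(congr1 size): H.
have B4 : forall x y, qual x y -> ~~ e (wf x y) s2.
  move=> x y q; have [Hz1 Hz2 Hw1 Hw2] := Hq x y q; move: q => /and4P[s1x xa xy ys1].
  apply/negP => ws2.
  case: (eqVneq s2 (zf x y)) => [sz|sz].
    have H : [:: x; y; zf x y] = [:: a; b; s2] by apply: KLe; bsolve esy; rewrite sz.
    by case: H => xa'; move: xa; rewrite xa' eqxx.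
  have H : [:: x; y; zf x y; wf x y; s2] = [:: a; b; s2] by apply: KLe; bsolve esy.
  by move/(congr1 size): H.
have B5b : forall x y, qual x y -> wf x y != l2.
  move=> x y q; apply/eqP => h; move/negP: (B4 x y q); apply; by rewrite h esy.
have B2 : forall x y c, qual x y -> e b c -> e (wf x y) c -> False.
  move=> x y c q bc wc; have ws1 := B5a x y q.
  have [Hz1 Hz2 Hw1 Hw2] := Hq x y q; move: q => /and4P[s1x xa xy ys1].
  case: (eqVneq c a) => [ca|ca]; first subst c.
    have H : [:: x; y; zf x y; wf x y] = [:: a; wf x y] by apply: KLe; bsolve esy.
    by move/(congr1 size): H.
  case: (eqVneq c (zf x y)) => [cz|cz].
    have H : [:: x; y; zf x y] = [:: a; b; c] by apply: KLe; bsolve esy; rewrite ?cz.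
    by case: H => xa'; move: xa; rewrite xa' eqxx.
  have H : [:: x; y; zf x y; wf x y; c] = [:: a; b; c] by apply: KLe; bsolve esy.
  by move/(congr1 size): H.
have B1 : forall x y x' y' c, qual x y -> qual x' y' -> wf x y != wf x' y' ->
    e (wf x y) c -> e (wf x' y') c -> False.
  move=> x y x' y' c q q' ww wc wc'.
  have [Hz1 Hz2 Hw1 Hw2] := Hq x y q; move: q => /and4P[s1x xa xy ys1].
  have [Hz1' Hz2' Hw1' Hw2'] := Hq x' y' q'; move: q' => /and4P[s1x' xa' xy' ys1'].
  case: (eqVneq c (zf x y)) => [cz|cz]; case: (eqVneq c (zf x' y')) => [cz'|cz'].
  - have H : [:: x; y; zf x y] = [:: x'; y'; zf x' y'] by apply: KLe; bsolve esy; rewrite -cz -cz'.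
    by case: H => ex ey _; move: ww; rewrite ex ey eqxx.
  - have H : [:: x; y; zf x y] = [:: x'; y'; zf x' y'; wf x' y'; c] by apply: KLe; bsolve esy; rewrite -cz.
    by move/(congr1 size): H.
  - have H : [:: x; y; zf x y; wf x y; c] = [:: x'; y'; zf x' y'] by apply: KLe; bsolve esy; rewrite -cz'.
    by move/(congr1 size): H.
  - have H : [:: x; y; zf x y; wf x y; c] = [:: x'; y'; zf x' y'; wf x' y'; c] by apply: KLe; bsolve esy.
    by case: H => _ _ _ ew; move: ww; rewrite ew eqxx.
pose W := [set w | [exists x, [exists y, qual x y && (w == wf x y)]]].
have inW : forall w, w \in W -> exists x y, qual x y /\ w = wf x y.
  move=> w; rewrite inE => /existsP[x /existsP[y /andP[q /eqP ->]]]; by exists x, y.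
have WI : forall x y, qual x y -> wf x y \in W.
  move=> x y q; rewrite inE; apply/existsP; exists x; apply/existsP; exists y; by rewrite q eqxx.
apply: (LLe (b |: W) (s1 |: (l2 |: W))).
- move=> u v; rewrite !in_setU1 => /orP[/eqP->|uW] /orP[/eqP->|vW] uv w;
    apply/negP => /andP[h1 h2].
  + by move: uv; rewrite eqxx.
  + have [x [y [q ev]]] := inW v vW; subst v; exact: (B2 x y w q h1 h2).
  + have [x [y [q eu]]] := inW u uW; subst u; exact: (B2 x y w q h2 h1).
  + have [x [y [q eu]]] := inW u uW; have [x' [y' [q' ev]]] := inW v vW.
    subst u v; exact: (B1 x y x' y' w q q' uv h1 h2).
- move=> u v; rewrite !in_setU1 => /orP[/eqP->|/orP[/eqP->|uW]] /orP[/eqP->|/orP[/eqP->|vW]] uv w;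
    apply/negP => /andP[h1 h2].
  + by move: uv; rewrite eqxx.
  + by move: ns12; rewrite -(l2N w h2) h1.
  + have [x [y [q ev]]] := inW v vW; subst v; exact: (B3 x y w q h2 h1).
  + by move: ns12; rewrite -(l2N w h1) h2.
  + by move: uv; rewrite eqxx.
  + have [x [y [q ev]]] := inW v vW; subst v. move/negP: (B4 x y q); apply.
    by rewrite -(l2N w h1).
  + have [x [y [q eu]]] := inW u uW; subst u; exact: (B3 x y w q h1 h2).
  + have [x [y [q eu]]] := inW u uW; subst u. move/negP: (B4 x y q); apply.
    by rewrite -(l2N w h2).
  + have [x [y [q eu]]] := inW u uW; have [x' [y' [q' ev]]] := inW v vW.
    subst u v; exact: (B1 x y x' y' w q q' uv h1 h2).
- move=> t u v; rewrite !in_setU1 => /orP[/eqP->|/orP[/eqP->|tW]] tu uv.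
  + case: (eqVneq u a) => [ua|ua].
      exists b; split; first by rewrite in_setU1 eqxx.
      exists a; split; [by rewrite esy | by rewrite -ua].
    case: (eqVneq v s1) => [vs|vs].
      exists b; split; first by rewrite in_setU1 eqxx.
      exists a; split; [by rewrite esy | by rewrite vs esy].
    have q : qual u v by rewrite /qual tu ua uv vs.
    have [Hz1 Hz2 Hw1 Hw2] := Hq u v q.
    exists (wf u v); split; first by rewrite in_setU1 WI ?orbT.
    exists (zf u v); split; by rewrite esy.
  + exists b; split; first by rewrite in_setU1 eqxx.
    exists s2; split=> //; by rewrite -(l2N u tu).
  + exists t; split; first by rewrite in_setU1 tW orbT.
    by exists u.
- have s1W : s1 \notin W by apply/negP => /inW[x [y [q h]]]; move: (B5a x y q); rewrite -h eqxx.
  have l2W : l2 \notin W by apply/negP => /inW[x [y [q h]]]; move: (B5b x y q); rewrite -h eqxx.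
  have s1l2 : s1 != l2 by apply/eqP => h; move: ns12; rewrite h esy s2l2.
  rewrite cardsU1 [X in _ < X]cardsU1 cardsU1 in_setU1 (negbTE s1l2) (negbTE s1W) l2W /=.
  case: (b \in W) => /=; lia.
Qed.
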